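(* Let $\lambda>0$, $L>0$, and let $\{\{x_t(i)\}_{i\in[k]}\}_{t\in[T]}$ be any sequence with $x_t(i)\in\mathbb{R}^d$ and $\|x_t(i)\|_2\le L$ for all $i\in[k]$, $t\in[T]$. Let $V_0=\lambda I$ and $V_t=\lambda I+\sum_{s\in[t]}\sum_{i\in[k]}x_s(i)x_s(i)^\top$. Then $$\sum_{t\in[T]}\sum_{i\in[k]}\mathbb{1}\Big(\|x_t(i)\|_{V_{t-1}^{-1}}>1/\sqrt k\Big)\le 2dk\log\big(1+L^2kT/(d\lambda)\big).$$
   Context: For a positive definite matrix $A$ and vector $x$, $\|x\|_A=\sqrt{x^\top Ax}$; $[n]=\{1,\dots,n\}$. *)

(* Defs.v *)
From HB Require Import structures.
From mathcomp Require Import all_boot all_order all_algebra.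
From mathcomp Require Import all_classical all_reals all_analysis.
Set Implicit Arguments. Unset Strict Implicit. Unset Printing Implicit Defensive.
Import Order.TTheory GRing.Theory Num.Theory.
Local Open Scope ring_scope.

(* Gram matrix V_t = lambda I + sum_{s=1}^t sum_{i<k} x_s(i) x_s(i)^T,
   rounds are indexed 1..T (so V_0 = lambda I). *)
Definition gramV (R : realType) (d k : nat) (lam : R)
  (x : nat -> 'I_k -> 'cV[R]_d) (t : nat) : 'M[R]_d :=
  lam%:M + \sum_(1 <= s < t.+1) \sum_(i < k) (x s i *m (x s i)^T).

Definition mnorm (R : realType) (d : nat) (A : 'M[R]_d) (v : 'cV[R]_d) : R :=
  Num.sqrt (((v^T *m A *m v) : 'M[R]_1) ord0 ord0).

Definition norm2 (R : realType) (d : nat) (v : 'cV[R]_d) : R :=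
  Num.sqrt (\sum_(j < d) v j ord0 ^+ 2).

(* Main.v *)
Require Import Defs.
From HB Require Import structures.
From mathcomp Require Import all_boot all_order all_algebra.
From mathcomp Require Import all_classical all_reals all_analysis.
From mathcomp Require Import ring lra.
Set Implicit Arguments. Unset Strict Implicit. Unset Printing Implicit Defensive.
Import Order.TTheory GRing.Theory Num.Theory.
Local Open Scope ring_scope.

Section Mx.
Context {R : realFieldType}.

Definition qf n (A : 'M[R]_n) (v : 'cV[R]_n) : R := (v^T *m A *m v) 0 0.
Definition pd n (A : 'M[R]_n) := forall v : 'cV[R]_n, v != 0 -> 0 < qf A v.

Lemma qf_conj n m (P : 'M[R]_(n, m)) A v : qf (P^T *m A *m P) v = qf A (P *m v).
Proof. by rewrite /qf trmx_mul !mulmxA. Qed.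

Lemma qf_delta n (A : 'M[R]_n) i : qf A (delta_mx i 0) = A i i.
Proof. by rewrite /qf trmx_delta -rowE -colE !mxE. Qed.

Lemma delta_neq0 n (i : 'I_n) : (delta_mx i 0 : 'cV[R]_n) != 0.
Proof. by apply/eqP => /matrixP /(_ i 0); rewrite !mxE !eqxx => /eqP; rewrite oner_eq0. Qed.

Lemma pd_diag n (A : 'M[R]_n) i : pd A -> 0 < A i i.
Proof. by move=> h; rewrite -qf_delta; apply/h/delta_neq0. Qed.

Lemma det_schur n (M : 'M[R]_(1 + n)) : ulsubmx M 0 0 != 0 ->
  \det M = ulsubmx M 0 0 * \det (drsubmx M - (ulsubmx M 0 0)^-1 *: (dlsubmx M *m ursubmx M)).
Proof.
set a := ulsubmx M 0 0 => a0.
set D' := (drsubmx M - _).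
have -> : M = block_mx 1%:M 0 (a^-1 *: dlsubmx M) 1%:M *m block_mx a%:M (ursubmx M) 0 D'.
  rewrite mulmx_block !mul1mx !mul0mx !addr0 mul_mx_scalar scalerA mulfV //.
  rewrite scale1r -scalemxAl /D' addrC subrK.
  by rewrite /a -mx11_scalar submxK.
by rewrite det_mulmx det_lblock det_ublock !det1 det_scalar1 !mul1r.
Qed.


Lemma qf_blockdiag n1 n2 (A : 'M[R]_n1) (D : 'M[R]_n2) y :
  qf (block_mx A 0 0 D) (col_mx 0 y) = qf D y.
Proof.
by rewrite /qf tr_col_mx mul_row_block mul_row_col !mulmx0 !add0r.
Qed.

Lemma hadamard n (M : 'M[R]_n) : M^T = M -> pd M -> 0 < \det M /\ \det M <= \prod_i M i i.
Proof.
elim: n M => [|n IH] M sM pM.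
  by rewrite det_mx00 big_ord0 ltr01 lexx.
pose M' : 'M[R]_(1 + n) := M.
set a := ulsubmx M' 0 0.
have ha : a = M 0 0.
  by rewrite /a !mxE; congr (M _ _); apply/val_inj.
have apos : 0 < a by rewrite ha; apply: pd_diag.
set b := ursubmx M'.
have hc : dlsubmx M' = b^T by rewrite /b trmx_ursub sM.
set D' := drsubmx M' - a^-1 *: (b^T *m b).
have hdet : \det M = a * \det D'.
  by rewrite (det_schur (M:=M')) -/a ?hc // lt0r_neq0.
have sD : D'^T = D'.
  rewrite /D' linearB /= linearZ /= trmx_mul trmxK.
  by rewrite trmx_drsub sM.
have pD : pd D'.
  move=> y y0.
  pose P : 'M[R]_(1+n) := block_mx 1%:M (- (a^-1 *: b)) 0 1%:M.
  have HP : P^T *m M' *m P = block_mx a%:M 0 0 D'.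
    have hul : ulsubmx M' = a%:M by rewrite /a -mx11_scalar.
    rewrite -[in LHS](submxK M') hc hul -/b /P tr_block_mx !trmx1 trmx0 mulmx_block.
    rewrite !mul1mx !mul0mx !addr0 mul_mx_scalar linearN /= linearZ /= scalerN scalerA mulfV ?lt0r_neq0 // scale1r addNr mulNmx -scalemxAl (addrC (- _)) -/D'.
    by rewrite mulmx_block !mulmx1 !mulmx0 !mul0mx !addr0 !add0r mul_scalar_mx scalerN scalerA mulfV ?lt0r_neq0 // scale1r addNr.
  rewrite -(qf_blockdiag (a%:M : 'M[R]_1)) -HP qf_conj; apply: pM.
  rewrite /P mul_block_col; apply: contraNneq y0 => h.
  by have := congr1 (@dsubmx R 1 n 1) h; rewrite col_mxKd mul0mx mul1mx add0r => ->; rewrite linear0.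
have [dpos dle] := IH D' sD pD.
rewrite hdet big_ord_recl -ha; split; first exact: mulr_gt0.
rewrite ler_pM2l //; apply: le_trans dle _; apply: ler_prod => i _.
apply/andP; split; first exact/ltW/pd_diag.
rewrite /D' !mxE big_ord1 !mxE.
have -> : rshift 1 i = lift ord0 i :> 'I_(1+n) by apply/val_inj.
rewrite /M' gerBl; apply: mulr_ge0; [by rewrite invr_ge0 ltW | by rewrite -expr2 sqr_ge0].
Qed.

Definition bil n (A : 'M[R]_n) (u v : 'cV[R]_n) : R := (u^T *m A *m v) 0 0.
Lemma qfE n (A : 'M[R]_n) v : qf A v = bil A v v. Proof. by []. Qed.

Lemma bilDl n (A : 'M[R]_n) u1 u2 v : bil A (u1 + u2) v = bil A u1 v + bil A u2 v.
Proof. by rewrite /bil linearD /= !mulmxDl mxE. Qed.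
Lemma bilDr n (A : 'M[R]_n) u v1 v2 : bil A u (v1 + v2) = bil A u v1 + bil A u v2.
Proof. by rewrite /bil !mulmxDr mxE. Qed.
Lemma bilZl n (A : 'M[R]_n) c u v : bil A (c *: u) v = c * bil A u v.
Proof. by rewrite /bil linearZ /= -!scalemxAl mxE. Qed.
Lemma bilZr n (A : 'M[R]_n) c u v : bil A u (c *: v) = c * bil A u v.
Proof. by rewrite /bil -!scalemxAr mxE. Qed.
Lemma bilNl n (A : 'M[R]_n) u v : bil A (- u) v = - bil A u v.
Proof. by rewrite -scaleN1r bilZl mulN1r. Qed.
Lemma bilNr n (A : 'M[R]_n) u v : bil A u (- v) = - bil A u v.
Proof. by rewrite -scaleN1r bilZr mulN1r. Qed.
Lemma bil_sym n (A : 'M[R]_n) u v : A^T = A -> bil A u v = bil A v u.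
Proof.
move=> sA; have h (M : 'M[R]_1) : M 0 0 = M^T 0 0 by rewrite mxE.
by rewrite /bil h !trmx_mul trmxK sA mulmxA.
Qed.

Lemma qf_lin n (A : 'M[R]_n) a b u w : A^T = A ->
  qf A (a *: u + b *: w) = a ^+ 2 * qf A u + 2 * a * b * bil A u w + b ^+ 2 * qf A w.
Proof.
move=> sA; rewrite !qfE !bilDl !bilDr !bilZl !bilZr (bil_sym w u sA).
by rewrite /GRing.exp /=; ring.
Qed.

Definition psd n (A : 'M[R]_n) := forall v, 0 <= qf A v.

Lemma CS n (A : 'M[R]_n) u w : A^T = A -> psd A ->
  bil A u w ^+ 2 <= qf A u * qf A w.
Proof.
move=> sA pA.
have h1 := pA (qf A w *: u + (- bil A u w) *: w); rewrite qf_lin // in h1.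
have h2 := pA ((- bil A u w) *: u + qf A u *: w); rewrite qf_lin // in h2.
have h3 := pA (1 *: u + (- bil A u w) *: w); rewrite qf_lin // in h3.
have h4 := pA u; have h5 := pA w.
move: h1 h2 h3 h4 h5; set qu := qf A u; set qw := qf A w; set c := bil A u w.
move=> h1 h2 h3 h4 h5.
have [qw0|qw0] := eqVneq qw 0.
  rewrite qw0 in h1 h2 h3 *; rewrite mulr0.
  have e1 : - (c ^+ 2 * qu) >= 0 by move: h2; rewrite /GRing.exp /=; lra.
  have e2 : qu >= 2 * c ^+ 2 by move: h3; rewrite /GRing.exp /=; lra.
  have e3 : 0 <= c ^+ 2 by apply: sqr_ge0.
  nra.
have qwp : 0 < qw by rewrite lt0r qw0 h5.
have e1 : 0 <= qw * (qu * qw - c ^+ 2) by move: h1; rewrite /GRing.exp /=; nra.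
by rewrite pmulr_rge0 // subr_ge0 in e1.
Qed.


Lemma pd_unit n (A : 'M[R]_n) : A^T = A -> pd A -> A \in unitmx.
Proof.
move=> sA pA; have [h _] := hadamard sA pA.
by rewrite unitmxE unitfE lt0r_neq0.
Qed.

Lemma inv_sym n (A : 'M[R]_n) : A^T = A -> (invmx A)^T = invmx A.
Proof. by move=> sA; rewrite trmx_inv sA. Qed.

Lemma qf_inv n (A : 'M[R]_n) v : A^T = A -> A \in unitmx ->
  qf A (invmx A *m v) = qf (invmx A) v.
Proof. by move=> sA uA; rewrite -qf_conj inv_sym // mulVmx // mul1mx. Qed.

Lemma qf0 n (A : 'M[R]_n) : qf A 0 = 0.
Proof. by rewrite /qf mulmx0 mxE. Qed.

Lemma pd_psd n (A : 'M[R]_n) : pd A -> psd A.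
Proof.
move=> pA v; have [->|v0] := eqVneq v 0; first by rewrite qf0.
exact/ltW/pA.
Qed.

Lemma psd_inv n (A : 'M[R]_n) : A^T = A -> pd A -> psd (invmx A).
Proof. by move=> sA pA v; rewrite -qf_inv ?pd_unit //; apply: pd_psd. Qed.

Lemma bil_inv_r n (A : 'M[R]_n) y w : A \in unitmx ->
  bil A y (invmx A *m w) = (y^T *m w) 0 0.
Proof. by move=> uA; rewrite /bil mulmxA -(mulmxA y^T) mulmxV // mulmx1. Qed.

Lemma variational n (A : 'M[R]_n) y w : A^T = A -> A \in unitmx -> psd A ->
  2 * (y^T *m w) 0 0 - qf A y <= qf (invmx A) w.
Proof.
move=> sA uA pA.
have := pA (1 *: y + (-1) *: (invmx A *m w)); rewrite qf_lin // qf_inv // bil_inv_r //.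
rewrite /GRing.exp /=; lra.
Qed.

Lemma mx11_tr (M : 'M[R]_1) : M 0 0 = M^T 0 0.
Proof. by rewrite mxE. Qed.

Lemma mx11_mul (A B : 'M[R]_1) : (A *m B) 0 0 = A 0 0 * B 0 0.
Proof. by rewrite mxE big_ord1. Qed.

Lemma qf_rank1 n (u y : 'cV[R]_n) : qf (u *m u^T) y = ((u^T *m y) 0 0) ^+ 2.
Proof.
rewrite /qf mulmxA -mulmxA mx11_mul expr2; congr (_ * _).
by rewrite mx11_tr trmx_mul trmxK.
Qed.

Lemma mdl1 n (a b : 'cV[R]_n) : \det (1%:M + a *m b^T) = 1 + (b^T *m a) 0 0.
Proof.
have E1 : (block_mx 1%:M b^T (-a) 1%:M : 'M[R]_(1 + n)) =
   block_mx 1%:M 0 (-a) 1%:M *m block_mx 1%:M b^T 0 (1%:M + a *m b^T).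
  rewrite mulmx_block !mul1mx !mul0mx !mulmx1 !addr0 mulNmx.
  by rewrite addrCA addNr addr0.
have E2 : (block_mx 1%:M b^T (-a) 1%:M : 'M[R]_(1 + n)) =
   block_mx (1%:M + b^T *m a) b^T 0 1%:M *m block_mx 1%:M 0 (-a) 1%:M.
  rewrite mulmx_block !mul1mx !mul0mx !mulmx1 !mulmx0 !add0r mulmxN.
  by rewrite addrK.
have := congr1 determinant E1; rewrite E2 !det_mulmx det_lblock det_ublock !det1 !mul1r.
rewrite det_ublock det1 mul1r !mulr1 det_mx11 !mxE => <-.
by [].

Qed.

Lemma qfD n (A B : 'M[R]_n) v : qf (A + B) v = qf A v + qf B v.
Proof. by rewrite /qf mulmxDr mulmxDl mxE. Qed.

Lemma qfZ n (A : 'M[R]_n) t v : qf A (t *: v) = t ^+ 2 * qf A v.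
Proof. by rewrite !qfE bilZl bilZr expr2 mulrA. Qed.

Lemma qf_sum n I (r : seq I) (F : I -> 'M[R]_n) v :
  qf (\sum_(i <- r) F i) v = \sum_(i <- r) qf (F i) v.
Proof.
elim: r => [|i r IH]; first by rewrite !big_nil /qf mulmx0 mul0mx mxE.
by rewrite !big_cons qfD IH.
Qed.

Lemma det_rank1 n (V : 'M[R]_n) u : V \in unitmx ->
  \det (V + u *m u^T) = \det V * (1 + qf (invmx V) u).
Proof.
move=> uV.
have -> : V + u *m u^T = V *m (1%:M + (invmx V *m u) *m u^T).
  by rewrite mulmxDr mulmx1 !mulmxA mulmxV // mul1mx.
by rewrite det_mulmx mdl1 /qf mulmxA.
Qed.

Lemma sym_rank1 n (V : 'M[R]_n) (u : 'cV[R]_n) : V^T = V -> (V + u *m u^T)^T = V + u *m u^T.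
Proof. by move=> sV; rewrite linearD /= trmx_mul trmxK sV. Qed.

Lemma pd_rank1 n (V : 'M[R]_n) (u : 'cV[R]_n) : pd V -> pd (V + u *m u^T).
Proof.
move=> pV v v0; rewrite qfD qf_rank1; apply: (lt_le_trans (pV v v0)).
by rewrite lerDl sqr_ge0.
Qed.

Lemma upd n (V : 'M[R]_n) (u w : 'cV[R]_n) : V^T = V -> pd V ->
  qf (invmx V) w <= (1 + qf (invmx V) u) * qf (invmx (V + u *m u^T)) w.
Proof.
move=> sV pV.
set V' := V + u *m u^T.
have sV' : V'^T = V' by apply: sym_rank1.
have pV' : pd V' by apply: pd_rank1.
have uV := pd_unit sV pV; have uV' := pd_unit sV' pV'.
set qu := qf (invmx V) u; set qw := qf (invmx V) w.
have qu0 : 0 <= qu by apply: psd_inv.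
have qw0 : 0 <= qw by apply: psd_inv.
set t := (1 + qu)^-1.
have tp : 0 < t by rewrite invr_gt0 ltr_wpDr.
have ht : t * (1 + qu) = 1 by rewrite mulVf // lt0r_neq0 // ltr_wpDr.
set z := invmx V *m w.
have := variational (t *: z) w sV' uV' (pd_psd pV').
have e1 : ((t *: z)^T *m w) 0 0 = t * qw.
  by rewrite linearZ /= -scalemxAl mxE /z trmx_mul inv_sym // mulmxA.
have e2 : qf V' (t *: z) = t ^+ 2 * qw + (t * bil (invmx V) u w) ^+ 2.
  rewrite /V' qfD qf_rank1 qfZ qf_inv // -scalemxAr mxE /z /bil mulmxA.
  by rewrite exprMn.
rewrite e1 e2 => hv.
have hc := CS u w (inv_sym sV) (psd_inv sV pV).
move: hv hc; set c := bil _ u w; set Q := qf _ w => hv hc.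
have h1 : t * c ^+ 2 <= t * (qu * qw) by rewrite ler_pM2l.
have h2 : (1 + qu) * (2 * (t * qw) - (t ^+ 2 * qw + (t * c) ^+ 2)) <= (1 + qu) * Q.
  by rewrite ler_pM2l // ltr_wpDr.
apply: le_trans h2.
rewrite exprMn !expr2 in h1 *.
have -> : (1 + qu) * (2 * (t * qw) - (t * t * qw + t * t * (c * c))) =
   2 * qw * (t * (1 + qu)) - qw * (t * (1 + qu)) * t - (t * (1 + qu)) * (t * (c * c)).
  by ring.
rewrite ht; nra.
Qed.

Lemma detC n (V : 'M[R]_n) (s : seq 'cV[R]_n) : V^T = V -> pd V ->
  \det V * (1 + \sum_(u <- s) qf (invmx V) u) <= \det (V + \sum_(u <- s) u *m u^T).
Proof.
elim: s V => [|u s IH] V sV pV; first by rewrite !big_nil !addr0 mulr1.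
rewrite !big_cons (addrA V).
have sV' := sym_rank1 u sV; have pV' := pd_rank1 u pV.
apply: (le_trans _ (IH _ sV' pV')).
rewrite det_rank1 ?pd_unit // -mulrA ler_pM2l; last by have [] := hadamard sV pV.
rewrite mulrDr mulr1 addrA lerD2l mulr_sumr; apply: ler_sum => w _.
exact: upd.
Qed.

End Mx.

Lemma ln_lb (R : realType) (u : R) : 0 <= u <= 1 -> u / 2 <= ln (1 + u).
Proof.
case/andP=> u0 u1.
have p1 : 0 < 1 + u by lra.
have h := @le_ln1Dx R ((1 + u)^-1 - 1).
rewrite (addrC 1 ((1 + u)^-1 - 1)) subrK lnV ?posrE // in h.
have h2 : (1 + u)^-1 <= 1 - u / 2.
  rewrite -div1r ler_pdivrMr //; nra.
have : 0 < (1 + u)^-1 by rewrite invr_gt0.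
move=> h3; have := h ltac:(lra); lra.
Qed.

Lemma mnormE (R : realType) n (A : 'M[R]_n) v : mnorm A v = Num.sqrt (qf A v).
Proof. by []. Qed.

Lemma ind_le (R : realType) (k : nat) (q : R) : (0 < k)%N -> 0 <= q ->
  (if (1 : R) / Num.sqrt (k%:R : R) < Num.sqrt q then 1 else 0 : R) <= k%:R * q.
Proof.
move=> k0 q0; have kp : (0 : R) < k%:R by rewrite ltr0n.
case: ifP => h; last by rewrite mulr_ge0 // ler0n.
have sk : 0 < Num.sqrt (k%:R : R) by rewrite sqrtr_gt0.
rewrite ltr_pdivrMr // -sqrtrM // in h.
have qk0 : 0 <= q * k%:R by rewrite mulr_ge0 // ler0n.
have := sqr_sqrtr qk0; set s := Num.sqrt _ => hs.
rewrite mulrC -hs expr2; apply/ltW/(lt_trans h); by rewrite ltr_pMr ?(lt_trans ltr01 h).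
Qed.

Lemma gram_sym (R : realType) d k (lam : R) (x : nat -> 'I_k -> 'cV[R]_d) t :
  (gramV lam x t)^T = gramV lam x t.
Proof.
rewrite /gramV linearD /= tr_scalar_mx linear_sum /=; congr (_ + _).
apply: eq_bigr => s _; rewrite linear_sum; apply: eq_bigr => i _.
by rewrite /= trmx_mul trmxK.
Qed.

Lemma qf_scalar (R : realType) n (c : R) (v : 'cV[R]_n) :
  qf (c%:M) v = c * \sum_j v j 0 ^+ 2.
Proof.
rewrite /qf mul_mx_scalar -scalemxAl mxE; congr (_ * _); rewrite mxE.
by apply: eq_bigr => j _; rewrite mxE expr2.
Qed.

Lemma sum_sq_pos (R : realType) n (v : 'cV[R]_n) : v != 0 -> 0 < \sum_j v j 0 ^+ 2.
Proof.
move=> v0; rewrite lt_def sumr_ge0 ?andbT => [|j _]; last exact: sqr_ge0.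
apply: contra v0 => /eqP h; apply/eqP/matrixP => i j; rewrite (ord1 j) mxE.
have := @psumr_eq0P _ _ predT (fun j => v j 0 ^+ 2) (fun j _ => sqr_ge0 _) h i isT.
by move/eqP; rewrite sqrf_eq0 => /eqP.
Qed.

Lemma gram_pd (R : realType) d k (lam : R) (x : nat -> 'I_k -> 'cV[R]_d) t :
  0 < lam -> pd (gramV lam x t).
Proof.
move=> l0 v v0; rewrite /gramV qfD qf_scalar qf_sum.
apply: (lt_le_trans (mulr_gt0 l0 (sum_sq_pos v0))); rewrite lerDl.
apply: sumr_ge0 => s _; rewrite qf_sum; apply: sumr_ge0 => i _.
by rewrite qf_rank1 sqr_ge0.
Qed.

Lemma gram_succ (R : realType) d k (lam : R) (x : nat -> 'I_k -> 'cV[R]_d) t :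
  gramV lam x t.+1 = gramV lam x t + \sum_(u <- [seq x t.+1 i | i <- enum 'I_k]) u *m u^T.
Proof. by rewrite /gramV big_nat_recr //= addrA big_map enumT. Qed.

Lemma round (R : realType) d k (lam : R) (x : nat -> 'I_k -> 'cV[R]_d) t :
  0 < lam -> (0 < k)%N ->
  \sum_(i < k) (if (1 : R) / Num.sqrt (k%:R : R) < mnorm (invmx (gramV lam x t)) (x t.+1 i) then 1 else 0 : R)
  <= 2 * k%:R * (ln (\det (gramV lam x t.+1)) - ln (\det (gramV lam x t))).
Proof.
move=> l0 k0.
have sV := gram_sym lam x t; have pV := gram_pd x t l0.
have sV' := gram_sym lam x t.+1; have pV' := gram_pd x t.+1 l0.
have [dp _] := hadamard sV pV; have [dp' _] := hadamard sV' pV'.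
have hC := detC [seq x t.+1 i | i <- enum 'I_k] sV pV.
rewrite -gram_succ big_map enumT in hC.
move: hC; set Q := \sum_(i < k) _ => hC.
have Q0 : 0 <= Q by apply: sumr_ge0 => i _; apply: psd_inv.
have hD : ln (1 + Q) <= ln (\det (gramV lam x t.+1)) - ln (\det (gramV lam x t)).
  rewrite lerBrDl -lnM ?posrE ?ltr_wpDr // ler_ln ?posrE ?mulr_gt0 ?ltr_wpDr //.
set m := \sum_(i < k) _.
have kp : (0 : R) < k%:R by rewrite ltr0n.
have hm1 : m <= k%:R.
  rewrite -[k in X in _ <= X]card_ord -sumr_const; apply: ler_sum => i _.
  by case: ifP.
have hm2 : m <= k%:R * Q.
  rewrite mulr_sumr; apply: ler_sum => i _; rewrite mnormE; apply: ind_le => //.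
  exact: psd_inv.
have m0 : 0 <= m by apply: sumr_ge0 => i _; case: ifP.
have u01 : 0 <= m / k%:R <= 1.
  by apply/andP; split; [exact: divr_ge0 m0 (ltW kp) | rewrite ler_pdivrMr // mul1r].
have := ln_lb u01 => hl.
have hl2 : ln (1 + m / k%:R) <= ln (1 + Q).
  have mk0 : 0 <= m / k%:R by exact: divr_ge0 m0 (ltW kp).
  rewrite ler_ln ?posrE ?ltr_wpDr // lerD2l ler_pdivrMr // mulrC //.
have : m / k%:R / 2 <= ln (\det (gramV lam x t.+1)) - ln (\det (gramV lam x t)).
  by apply: (le_trans hl); apply: (le_trans hl2).
rewrite ler_pdivrMr // ler_pdivrMr //.
by move=> h; apply: (le_trans h); rewrite -mulrA mulrC.
Qed.

Lemma tele (R : realType) d k (lam : R) (x : nat -> 'I_k -> 'cV[R]_d) T :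
  0 < lam -> (0 < k)%N ->
  \sum_(1 <= t < T.+1) \sum_(i < k)
      (if (1 : R) / Num.sqrt (k%:R : R) < mnorm (invmx (gramV lam x t.-1)) (x t i) then 1 else 0 : R)
  <= 2 * k%:R * (ln (\det (gramV lam x T)) - ln (\det (gramV lam x 0))).
Proof.
move=> l0 k0; elim: T => [|T IH]; first by rewrite big_geq // subrr mulr0.
rewrite big_nat_recr //=; apply: le_trans (lerD IH (round x T l0 k0)) _.
by rewrite -mulrDr addrC addrA subrK.
Qed.

Lemma ln_prod (R : realType) (I : Type) (r : seq I) (F : I -> R) :
  (forall i, 0 < F i) -> ln (\prod_(i <- r) F i) = \sum_(i <- r) ln (F i).
Proof.
move=> h; elim: r => [|i r IH]; first by rewrite !big_nil ln1.
by rewrite !big_cons lnM ?posrE ?IH // prodr_gt0.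
Qed.

Lemma ln_tangent (R : realType) (y c : R) : 0 < y -> 0 < c -> ln y <= ln c + y / c - 1.
Proof.
move=> y0 c0; have h := @le_ln1Dx R (y / c - 1).
rewrite (addrC 1 (y / c - 1)) subrK ln_div ?posrE // in h.
have : -1 < y / c - 1 by rewrite ltrBrDr addNr divr_gt0.
move/h; lra.
Qed.

Lemma gram_diag (R : realType) d k (lam : R) (x : nat -> 'I_k -> 'cV[R]_d) T i :
  (gramV lam x T) i i = lam + \sum_(1 <= s < T.+1) \sum_(j < k) x s j i 0 ^+ 2.
Proof.
rewrite /gramV !mxE eqxx mulr1n summxE; congr (_ + _); apply: eq_bigr => s _.
rewrite summxE; apply: eq_bigr => j _.
by rewrite mxE big_ord1 mxE expr2.
Qed.

Lemma trace_bound (R : realType) d k T (lam L : R) (x : nat -> 'I_k -> 'cV[R]_d) :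
  (forall t i, (1 <= t <= T)%N -> norm2 (x t i) <= L) -> 0 < L ->
  \sum_i (gramV lam x T) i i <= d%:R * lam + T%:R * k%:R * L ^+ 2.
Proof.
move=> hx L0.
under eq_bigr => i _ do rewrite gram_diag.
rewrite big_split /= sumr_const card_ord (mulr_natl lam d) lerD2l.
rewrite exchange_big /=.
have -> : T%:R * k%:R * L ^+ 2 = \sum_(1 <= s < T.+1) \sum_(j < k) L ^+ 2.
  rewrite sumr_const_nat sumr_const card_ord subn1 /=.
  by rewrite -(mulr_natl (L ^+ 2 *+ k) T) -(mulr_natl (L ^+ 2) k) mulrA.
apply: ler_sum_nat => s /andP [s1 sT]; rewrite exchange_big /=.
apply: ler_sum => j _.
have h := hx s j ltac:(by rewrite s1 -ltnS).
have S0 : 0 <= \sum_i x s j i 0 ^+ 2 by apply: sumr_ge0 => i _; apply: sqr_ge0.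
rewrite -(sqr_sqrtr S0) !expr2; apply: ler_pM => //; exact: sqrtr_ge0.
Qed.

Unset Implicit Arguments.
Set Strict Implicit.

Theorem lemma6 (R : realType) (d k T : nat) (lam L : R)
  (x : nat -> 'I_k -> 'cV[R]_d) :
  (0 < d)%N -> 0 < lam -> 0 < L ->
  (forall t i, (1 <= t <= T)%N -> norm2 (x t i) <= L) ->
  (\sum_(1 <= t < T.+1) \sum_(i < k)
      (if (1 : R) / Num.sqrt (k%:R : R) < mnorm (invmx (gramV lam x t.-1)) (x t i) then 1 else 0 : R))
  <= 2 * d%:R * k%:R * ln (1 + L ^+ 2 * k%:R * T%:R / (d%:R * lam)).
Proof.
move=> d0 l0 L0 hx.
case: k x hx => [|k] x hx.
  rewrite big1 => [|t _]; last by rewrite big_ord0.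
  by rewrite mulr0 mul0r.
have k0 : (0 < k.+1)%N by [].
apply: le_trans (tele x T l0 k0) _.
have dp : (0 : R) < d%:R by rewrite ltr0n.
set c := lam + L ^+ 2 * k.+1%:R * T%:R / d%:R.
have c0 : 0 < c.
  by rewrite ltr_wpDr // divr_ge0 ?ler0n // !mulr_ge0 ?ler0n // ltW // exprn_gt0.
have hD0 : ln (\det (gramV lam x 0)) = d%:R * ln lam.
  rewrite /gramV big_geq // addr0 det_scalar lnXn //.
  by rewrite mulr_natl.
have sV := gram_sym lam x T; have pV := gram_pd x T l0.
have [dpos dle] := hadamard sV pV.
have ypos i : 0 < gramV lam x T i i by apply: pd_diag.
have h1 : ln (\det (gramV lam x T)) <= \sum_i ln (gramV lam x T i i).
  by rewrite -ln_prod // ler_ln ?posrE // prodr_gt0.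
have h2 : \sum_i ln (gramV lam x T i i) <= \sum_(i < d) (ln c + gramV lam x T i i / c - 1).
  by apply: ler_sum => i _; apply: ln_tangent.
have h3 : \sum_(i < d) (ln c + gramV lam x T i i / c - 1) <= d%:R * ln c.
  rewrite !big_split /= !sumr_const card_ord -mulr_suml.
  have tb := trace_bound lam hx L0.
  have : (\sum_i gramV lam x T i i) / c <= d%:R.
    rewrite ler_pdivrMr //; apply: (le_trans tb); rewrite /c mulrDr.
    rewrite (mulrC d%:R (_ / _)) divfK ?lt0r_neq0 //. 
    rewrite [d%:R * lam]mulrC; lra.
  rewrite -(mulr_natl (ln c) d) -(mulr_natl (-1) d); lra.
have hc : c / lam = 1 + L ^+ 2 * k.+1%:R * T%:R / (d%:R * lam).
  rewrite /c mulrDl divff ?lt0r_neq0 // invfM mulrA.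
  by [].
have hfin : ln (\det (gramV lam x T)) - ln (\det (gramV lam x 0)) <=
    d%:R * ln (1 + L ^+ 2 * k.+1%:R * T%:R / (d%:R * lam)).
  rewrite hD0 -hc ln_div ?posrE // mulrBr lerBlDr subrK.
  exact: (le_trans h1 (le_trans h2 h3)).
have kp : (0 : R) <= 2 * k.+1%:R by rewrite mulr_ge0 ?ler0n.
apply: le_trans (ler_wpM2l kp hfin) _.
set l := ln _; set kk := k.+1%:R; set dd := d%:R.
by rewrite !mulrA (mulrAC 2 kk dd).
Qed.
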